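(* For every $N\ge2$, the probability measure $P^{1,N}$ on $\mathbb{R}^2$ with density $\varphi^{1,N}(x)=\pi^{-1}e^{-N|x|^2}\sum_{\ell=0}^{N-1}\frac{(N|x|^2)^\ell}{\ell!}$ is log-concave (i.e. $x\mapsto N|x|^2-\log\sum_{\ell=0}^{N-1}\frac{(N|x|^2)^\ell}{\ell!}$ is convex on $\mathbb{R}^2$), and its second moment equals $\int_{\mathbb{R}^2}|x|^2\,P^{1,N}(\mathrm{d}x)=\frac{N+1}{2N}$.
   Context: $P^{1,N}$ is the one-particle marginal of the complex Ginibre ensemble (the Coulomb gas $P^N$ with $\beta_N=N^2$). *)

(* Defs.v *)
From Stdlib Require Import Reals Factorial.
Open Scope R_scope.

Definition sqnorm2 (x1 x2 : R) : R := x1 ^ 2 + x2 ^ 2.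

(* Density phi^{1,N} of the one-particle marginal of the complex Ginibre
   ensemble:  pi^{-1} e^{-N|x|^2} sum_{l=0}^{N-1} (N|x|^2)^l / l!  .
   (sum_f_R0 f (N-1) = f 0 + ... + f (N-1).) *)
Definition phi1N (N : nat) (x1 x2 : R) : R :=
  / PI * exp (- INR N * sqnorm2 x1 x2) *
  sum_f_R0 (fun l => (INR N * sqnorm2 x1 x2) ^ l / INR (fact l)) (N - 1).

Definition convex2 (f : R -> R -> R) : Prop :=
  forall (x1 x2 y1 y2 t : R), 0 <= t <= 1 ->
    f (t * x1 + (1 - t) * y1) (t * x2 + (1 - t) * y2)
    <= t * f x1 x2 + (1 - t) * f y1 y2.

Definition log_concave2 (p : R -> R -> R) : Prop :=
  convex2 (fun x1 x2 => - ln (p x1 x2)).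

Definition improper_int_R (f : R -> R) (l : R) : Prop :=
  (forall a b : R, inhabited (Riemann_integrable f a b)) /\
  forall eps : R, 0 < eps -> exists M : R, forall a b : R,
    a <= - M -> M <= b ->
    forall pr : Riemann_integrable f a b, Rabs (RiemannInt pr - l) < eps.

Definition integral_R2 (f : R -> R -> R) (l : R) : Prop :=
  exists g : R -> R,
    (forall x1 : R, improper_int_R (fun x2 => f x1 x2) (g x1)) /\
    improper_int_R g l.

(* Main.v *)
Require Import Defs.
From Stdlib Require Import Reals.
Open Scope R_scope.
From Stdlib Require Import Factorial Lra Lia FunctionalExtensionality.
From Coquelicot Require Import Coquelicot.
Open Scope R_scope.
Ltac toR := match goal with |- @eq _ ?x ?y => change (@eq R x y) end.


Definition imp (f : R -> R) (l : R) : Prop :=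
  (forall a b, ex_RInt f a b) /\
  forall eps, 0 < eps -> exists M, forall a b, a <= - M -> M <= b ->
    Rabs (RInt f a b - l) < eps.

Lemma imp_improper f l : imp f l -> improper_int_R f l.
Proof.
  intros [Hi Hl]. split.
  - intros a b. constructor. apply ex_RInt_Reals_0. apply Hi.
  - intros eps Heps. destruct (Hl eps Heps) as [M HM]. exists M.
    intros a b Ha Hb pr. rewrite <- RInt_Reals. apply HM; auto.
Qed.

Lemma imp_ext f g l : (forall x, f x = g x) -> imp f l -> imp g l.
Proof.
  intros H. replace g with f by (apply functional_extensionality; auto). auto.
Qed.

Lemma imp_plus f g l1 l2 : imp f l1 -> imp g l2 -> imp (fun x => f x + g x) (l1 + l2).
Proof.
  intros [Hf Lf] [Hg Lg]. split.
  - intros a b. apply (ex_RInt_plus f g); auto.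
  - intros eps Heps.
    destruct (Lf (eps/2)) as [M1 H1]; [lra|].
    destruct (Lg (eps/2)) as [M2 H2]; [lra|].
    exists (Rmax M1 M2). intros a b Ha Hb.
    assert (E : RInt (fun x => f x + g x) a b = RInt f a b + RInt g a b).
    { apply (RInt_plus f g); auto. }
    rewrite E.
    assert (A1 := H1 a b ltac:(pose proof (Rmax_l M1 M2); lra) ltac:(pose proof (Rmax_l M1 M2); lra)).
    assert (A2 := H2 a b ltac:(pose proof (Rmax_r M1 M2); lra) ltac:(pose proof (Rmax_r M1 M2); lra)).
    pose proof (Rabs_triang (RInt f a b - l1) (RInt g a b - l2)).
    replace (RInt f a b + RInt g a b - (l1 + l2)) with
      ((RInt f a b - l1) + (RInt g a b - l2)) by ring. lra.
Qed.

Lemma imp_scal c f l : imp f l -> imp (fun x => c * f x) (c * l).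
Proof.
  intros [Hf Lf]. split.
  - intros a b. apply (ex_RInt_scal f a b c); auto.
  - intros eps Heps.
    destruct (Lf (eps / (Rabs c + 1))) as [M H1].
    { apply Rdiv_lt_0_compat; auto. pose proof (Rabs_pos c); lra. }
    exists M. intros a b Ha Hb.
    assert (E : RInt (fun x => c * f x) a b = c * RInt f a b).
    { apply (RInt_scal f a b c); auto. }
    rewrite E. replace (c * RInt f a b - c * l) with (c * (RInt f a b - l)) by ring.
    rewrite Rabs_mult. specialize (H1 a b Ha Hb).
    pose proof (Rabs_pos c). pose proof (Rabs_pos (RInt f a b - l)).
    assert (Rabs (RInt f a b - l) * (Rabs c + 1) < eps).
    { apply Rmult_lt_reg_r with (/ (Rabs c + 1)).
      apply Rinv_0_lt_compat; lra.
      rewrite Rmult_assoc, Rinv_r by lra. rewrite Rmult_1_r. exact H1. }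
    nra.
Qed.

Lemma imp_sum (n : nat) (F : nat -> R -> R) (L : nat -> R) :
  (forall i, (i <= n)%nat -> imp (F i) (L i)) ->
  imp (fun x => sum_f_R0 (fun i => F i x) n) (sum_f_R0 L n).
Proof.
  induction n; intros H.
  - simpl. apply H. lia.
  - simpl. apply imp_plus.
    + apply IHn. intros i Hi. apply H. lia.
    + apply H. lia.
Qed.


Lemma exp_ge_pow y n : 0 <= y -> y ^ n / INR (fact n) <= exp y.
Proof.
  intros Hy. eapply Rle_trans; [|apply (exp_ge_taylor y n Hy)].
  destruct n.
  - simpl. lra.
  - rewrite tech5. assert (0 <= sum_f_R0 (fun k : nat => y ^ k / INR (fact k)) n).
    { apply cond_pos_sum. intros m. apply Rdiv_le_0_compat. apply pow_le; auto. apply INR_fact_lt_0. }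
    lra.
Qed.

Lemma decay k c : 0 < c -> forall eps, 0 < eps -> exists M, 0 < M /\
  forall x, M <= Rabs x -> Rabs (x ^ k * exp (- (c * x ^ 2))) < eps.
Proof.
  intros Hc eps Heps.
  set (n := S k).
  set (P := c ^ n / INR (fact n)).
  assert (HP : 0 < P). { unfold P. apply Rdiv_lt_0_compat. apply pow_lt; auto. apply INR_fact_lt_0. }
  exists (1 + / (eps * P)). split.
  { assert (0 < / (eps * P)) by (apply Rinv_0_lt_compat; nra). lra. }
  intros x Hx. set (y := Rabs x) in *.
  assert (Hy1 : 1 <= y). { assert (0 < / (eps * P)) by (apply Rinv_0_lt_compat; nra). lra. }
  assert (Hx2 : x ^ 2 = y ^ 2) by (unfold y; rewrite pow2_abs; auto).
  set (E := exp (c * x ^ 2)).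
  assert (HE : P * (y ^ k * y ^ (k + 2)) <= E).
  { unfold E, P. rewrite Hx2.
    assert (H := exp_ge_pow (c * y ^ 2) n ltac:(nra)).
    replace (c ^ n / INR (fact n) * (y ^ k * y ^ (k + 2))) with ((c * y ^ 2) ^ n / INR (fact n)); auto.
    rewrite <- pow_add, Rpow_mult_distr, <- pow_mult.
    replace (2 * n)%nat with (k + (k + 2))%nat by (unfold n; lia). unfold Rdiv. ring. }
  assert (Hyk : y <= y ^ (k + 2)).
  { replace y with (y ^ 1) at 1 by ring. apply Rle_pow; auto. lia. }
  assert (Hpk : 0 < y ^ k) by (apply pow_lt; lra).
  assert (HEpos : 0 < E) by (apply exp_pos).
  rewrite Rabs_mult, <- RPow_abs. fold y.
  rewrite Rabs_right by (left; apply exp_pos).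
  rewrite exp_Ropp. fold E.
  assert (Hy2 : / (eps * P) < y) by lra.
  assert (Hey : 1 < eps * P * y).
  { apply Rmult_lt_reg_l with (/ (eps * P)). apply Rinv_0_lt_compat; nra.
    rewrite <- Rmult_assoc, Rinv_l by nra. lra. }
  assert (y ^ k < eps * E).
  { assert (P * (y ^ k * y) <= E) by nra. nra. }
  apply Rmult_lt_reg_r with E; auto. rewrite Rmult_assoc, Rinv_l by lra. lra.
Qed.


Lemma exd_cont (f : R -> R) x : ex_derive f x -> continuous f x.
Proof. intros H. exact (@ex_derive_continuous R_AbsRing R_NormedModule f x H). Qed.

Lemma exRI_cont (f : R -> R) a b : (forall z, continuous f z) -> ex_RInt f a b.
Proof. intros Hc. apply (@ex_RInt_continuous R_CompleteNormedModule). intros; apply Hc. Qed.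

Definition ga a x := exp (- (a * x ^ 2)).
Lemma ga_cont a x : continuous (ga a) x.
Proof. apply exd_cont. unfold ga. auto_derive. auto. Qed.
Lemma ga_int a u v : ex_RInt (ga a) u v.
Proof. apply exRI_cont; intros; apply ga_cont. Qed.
Definition G a x := RInt (ga a) 0 x.
Lemma G_deriv a x : is_derive (G a) x (ga a x).
Proof.
  apply is_derive_RInt with 0.
  - apply filter_forall. intros y. apply RInt_correct, ga_int.
  - apply ga_cont.
Qed.

Definition Hf a x t := exp (- (a * x ^ 2 * (1 + t ^ 2))) / (1 + t ^ 2).
Definition H a x := RInt (fun t => Hf a x t) 0 1.

Lemma Hf_der a x t : is_derive (fun u => Hf a u t) x (-2 * a * x * exp (- (a * x ^ 2 * (1 + t ^ 2)))).
Proof.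
  unfold Hf. auto_derive.
  - nra.
  - replace (x * (x * 1)) with (x ^ 2) by ring. replace (t * (t * 1)) with (t ^ 2) by ring.
    field. nra.
Qed.

Lemma Hf_cont a x t : continuous (Hf a x) t.
Proof. apply exd_cont. unfold Hf. auto_derive. nra. Qed.

Lemma Hf_int a x u v : ex_RInt (Hf a x) u v.
Proof. apply exRI_cont; intros; apply Hf_cont. Qed.

Lemma H_deriv a x : is_derive (H a) x (-2 * a * ga a x * G a x).
Proof.
  assert (D := is_derive_RInt_param (fun u t => Hf a u t) 0 1 x).
  unfold H.
  replace (-2 * a * ga a x * G a x) with
    (RInt (fun t => Derive (fun u => Hf a u t) x) 0 1).
  apply D.
  - apply filter_forall. intros y t _. eexists. apply Hf_der.
  - intros t _.
    apply continuity_2d_pt_ext with (fun u v => -2 * a * u * exp (- (a * u ^ 2 * (1 + v ^ 2)))).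
    { intros u v. symmetry. apply is_derive_unique. apply Hf_der. }
    apply continuity_2d_pt_mult.
    + apply continuity_2d_pt_mult. apply continuity_2d_pt_const. apply continuity_2d_pt_id1.
    + apply continuity_1d_2d_pt_comp with (f := exp).
      * apply derivable_continuous_pt, derivable_pt_exp.
      * apply continuity_2d_pt_opp. apply continuity_2d_pt_mult.
        apply continuity_2d_pt_mult. apply continuity_2d_pt_const.
        apply continuity_2d_pt_mult. apply continuity_2d_pt_id1.
        apply continuity_2d_pt_mult. apply continuity_2d_pt_id1. apply continuity_2d_pt_const.
        apply continuity_2d_pt_plus. apply continuity_2d_pt_const.
        apply continuity_2d_pt_mult. apply continuity_2d_pt_id2.
        apply continuity_2d_pt_mult. apply continuity_2d_pt_id2. apply continuity_2d_pt_const.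
  - apply filter_forall. intros y. apply Hf_int.
  - rewrite (RInt_ext _ (fun t => (-2 * a * ga a x) * (x * ga a (x * t + 0)))).
    + assert (ES := RInt_scal (fun t => x * ga a (x * t + 0)) 0 1 (-2 * a * ga a x)).
      unfold scal in ES; simpl in ES; unfold mult in ES; simpl in ES. rewrite ES.
      2:{ apply exRI_cont. intros z. apply exd_cont. unfold ga. auto_derive. auto. }
      f_equal.
      assert (E := RInt_comp_lin (ga a) x 0 0 1 (ga_int a _ _)).
      unfold scal in E; simpl in E; unfold mult in E; simpl in E.
      rewrite E. unfold G. f_equal; ring.
    + intros t _. assert (ED := is_derive_unique _ _ _ (Hf_der a x t)). simpl in ED |- *. rewrite ED.
      unfold ga. replace (- (a * (x * (x * 1)) * (1 + t * (t * 1)))) with (- (a * x ^ 2) + - (a * (x * t + 0) ^ 2)) by ring.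
      rewrite exp_plus. ring.
Qed.


Definition K a x := G a x * G a x + / a * H a x.

Lemma K_deriv a x : 0 < a -> is_derive (K a) x 0.
Proof.
  intros Ha.
  assert (D := is_derive_plus _ _ x _ _ (is_derive_mult _ _ x _ _ (G_deriv a x) (G_deriv a x) Rmult_comm) (is_derive_scal _ x (/a) _ (H_deriv a x))).
  unfold plus, mult, scal in D; simpl in D; unfold mult in D; simpl in D.
  replace 0 with (ga a x * G a x + G a x * ga a x + / a * (-2 * a * ga a x * G a x)).
  exact D. field. lra.
Qed.

Lemma K_const a x : 0 < a -> K a x = K a 0.
Proof.
  intros Ha.
  assert (I1 := is_RInt_derive (K a) (fun _ => 0) 0 x (fun y _ => K_deriv a y Ha)
     (fun y _ => continuous_const 0 y)).
  assert (I2 := is_RInt_const 0 x 0).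
  assert (E := filterlim_locally_unique _ _ _ I1 I2).
  unfold minus, plus, opp, scal in E; simpl in E; unfold mult in E; simpl in E.
  lra.
Qed.

Lemma H0 a : H a 0 = PI / 4.
Proof.
  unfold H.
  rewrite (RInt_ext _ (fun t => / (1 + t ^ 2))).
  2:{ intros t _. unfold Hf. replace (- (a * 0 ^ 2 * (1 + t ^ 2))) with 0 by ring. rewrite exp_0. unfold Rdiv. apply Rmult_1_l. }
  assert (Hc : forall y, ex_derive (fun t => / (1 + t ^ 2)) y).
  { intros y. auto_derive. intros ?. nra. }
  assert (I := is_RInt_derive atan (fun t => / (1 + t ^ 2)) 0 1
    (fun y _ => proj2 (is_derive_Reals _ _ _) (derivable_pt_lim_atan y))
    (fun y _ => exd_cont _ _ (Hc y))).
  rewrite (is_RInt_unique _ _ _ _ I).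
  unfold minus, plus, opp; simpl. rewrite atan_1, atan_0. lra.
Qed.

Lemma H_bounds a x : 0 < a -> 0 <= H a x <= ga a x.
Proof.
  intros Ha. unfold H. split.
  - apply RInt_ge_0. lra. apply Hf_int. intros t _. unfold Hf.
    apply Rdiv_le_0_compat. left; apply exp_pos. nra.
  - replace (ga a x) with (RInt (fun _ => ga a x) 0 1).
    2:{ rewrite RInt_const. unfold scal; simpl; unfold mult; simpl. ring. }
    apply RInt_le. lra. apply Hf_int. apply ex_RInt_const.
    intros t Ht. unfold Hf, ga.
    assert (exp (- (a * x ^ 2 * (1 + t ^ 2))) <= exp (- (a * x ^ 2))).
    { destruct (Req_dec x 0) as [->|Hx].
      - right. f_equal. ring.
      - left. apply exp_increasing. assert (0 < x^2) by (apply pow2_gt_0; auto).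
        assert (0 < a * x ^ 2 * t ^ 2).
        { apply Rmult_lt_0_compat. apply Rmult_lt_0_compat; auto. apply pow2_gt_0. lra. }
        replace (- (a * x ^ 2 * (1 + t ^ 2))) with (- (a * x ^ 2) - a * x ^ 2 * t ^ 2) by ring. lra. }
    assert (0 < exp (- (a * x ^ 2 * (1 + t ^ 2)))) by apply exp_pos.
    apply Rle_trans with (exp (- (a * x ^ 2 * (1 + t ^ 2)))); auto.
    unfold Rdiv. rewrite <- (Rmult_1_r (exp _)) at 2. apply Rmult_le_compat_l. lra.
    rewrite <- Rinv_1. apply Rinv_le_contravar. lra. nra.
Qed.


Lemma G_0 a : G a 0 = 0.
Proof. unfold G. rewrite RInt_point. reflexivity. Qed.

Lemma G_sq a x : 0 < a -> G a x * G a x = PI / (4 * a) - H a x / a.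
Proof.
  intros Ha. assert (E := K_const a x Ha). unfold K in E. rewrite G_0, H0 in E.
  assert (E2 : G a x * G a x = / a * (PI / 4) - / a * H a x) by lra.
  rewrite E2. field. lra.
Qed.

Lemma G_nonneg a x : 0 <= x -> 0 <= G a x.
Proof.
  intros Hx. unfold G. apply RInt_ge_0; auto. apply ga_int.
  intros; left; apply exp_pos.
Qed.

Lemma G_odd a x : G a (- x) = - G a x.
Proof.
  unfold G.
  assert (E := RInt_comp_lin (ga a) (-1) 0 0 x (ga_int a _ _)).
  unfold scal in E; simpl in E; unfold mult in E; simpl in E.
  replace (-1 * 0 + 0) with 0 in E by ring. replace (-1 * x + 0) with (-x) in E by ring.
  rewrite <- E.
  rewrite (RInt_ext _ (fun y => -1 * ga a y)).
  2:{ intros y _. f_equal. unfold ga. f_equal. f_equal. f_equal. ring. }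
  assert (ES := RInt_scal (ga a) 0 x (-1) (ga_int a _ _)).
  unfold scal in ES; simpl in ES; unfold mult in ES; simpl in ES.
  rewrite ES. toR. ring.
Qed.

Lemma G_lim a : 0 < a -> forall eps, 0 < eps -> exists M, 0 < M /\ forall x, M <= x ->
  Rabs (G a x - sqrt (PI / a) / 2) < eps.
Proof.
  intros Ha eps Heps.
  set (L := sqrt (PI / a) / 2).
  assert (HPa : 0 < PI / a) by (apply Rdiv_lt_0_compat; [apply PI_RGT_0|auto]).
  assert (HL : 0 < L) by (unfold L; apply Rdiv_lt_0_compat; [apply sqrt_lt_R0; auto|lra]).
  assert (HL2 : L * L = PI / (4 * a)).
  { unfold L. replace (sqrt (PI / a) / 2 * (sqrt (PI / a) / 2)) with (sqrt (PI / a) * sqrt (PI / a) / 4) by field.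
    rewrite sqrt_sqrt by lra. field. lra. }
  destruct (decay 0 a Ha (eps * a * L)) as [M [HM HMx]].
  { apply Rmult_lt_0_compat; auto. apply Rmult_lt_0_compat; auto. }
  exists M. split; auto. intros x Hx.
  assert (Hx0 : 0 <= x) by lra.
  specialize (HMx x ltac:(rewrite Rabs_right; lra)).
  rewrite pow_O, Rmult_1_l in HMx. rewrite Rabs_right in HMx by (left; apply exp_pos).
  assert (HG := G_nonneg a x Hx0).
  assert (HS := G_sq a x Ha).
  assert (HB := H_bounds a x Ha). unfold ga in HB.
  assert (E1 : Rabs (G a x - L) * (G a x + L) = H a x / a).
  { rewrite <- (Rabs_right (G a x + L)) by lra. rewrite <- Rabs_mult.
    replace ((G a x - L) * (G a x + L)) with (G a x * G a x - L * L) by ring.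
    rewrite HS, HL2. replace (PI / (4 * a) - H a x / a - PI / (4 * a)) with (- (H a x / a)) by ring.
    rewrite Rabs_Ropp. apply Rabs_right. apply Rle_ge. apply Rdiv_le_0_compat; lra. }
  assert (E2 : H a x / a < eps * L).
  { apply Rmult_lt_reg_r with a; auto. unfold Rdiv. rewrite Rmult_assoc, Rinv_l by lra.
    replace (eps * L * a) with (eps * a * L) by ring. lra. }
  assert (Rabs (G a x - L) * L <= Rabs (G a x - L) * (G a x + L)).
  { apply Rmult_le_compat_l. apply Rabs_pos. lra. }
  apply Rmult_lt_reg_r with L; auto. lra.
Qed.

Lemma imp_ga a : 0 < a -> imp (ga a) (sqrt (PI / a)).
Proof.
  intros Ha. split.
  - intros; apply ga_int.
  - intros eps Heps.
    destruct (G_lim a Ha (eps / 2)) as [M [HM HMx]]; [lra|].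
    exists M. intros u v Hu Hv.
    assert (E : RInt (ga a) u v = G a v + G a (- u)).
    { rewrite G_odd. unfold G.
      rewrite <- (RInt_Chasles (ga a) u 0 v) by apply ga_int.
      rewrite <- (opp_RInt_swap (ga a) 0 u) by apply ga_int.
      unfold plus, opp; simpl. ring. }
    rewrite E.
    assert (A1 := HMx v Hv). assert (A2 := HMx (- u) ltac:(lra)).
    replace (G a v + G a (- u) - sqrt (PI / a)) with
      ((G a v - sqrt (PI / a) / 2) + (G a (- u) - sqrt (PI / a) / 2)) by field.
    pose proof (Rabs_triang (G a v - sqrt (PI / a) / 2) (G a (- u) - sqrt (PI / a) / 2)). lra.
Qed.


Definition fj a j x := x ^ (2 * j) * exp (- (a * x ^ 2)).

Fixpoint mom a j : R :=
  match j with
  | O => sqrt (PI / a)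
  | S k => (2 * INR k + 1) / (2 * a) * mom a k
  end.

Definition Psi a j x := - (x ^ (2 * j + 1) * exp (- (a * x ^ 2))) / (2 * a).

Lemma Psi_der a j x : a <> 0 -> is_derive (Psi a j) x
  (fj a (S j) x - (2 * INR j + 1) / (2 * a) * fj a j x).
Proof.
  intros Ha. unfold Psi, fj. auto_derive; [trivial|].
  replace (j + (j + 0) + 1)%nat with (S (j + (j + 0))) by lia.
  replace (2 * S j)%nat with (S (S (j + (j + 0)))) by lia.
  replace (2 * j)%nat with (j + (j + 0))%nat by lia.
  simpl Init.Nat.pred. rewrite S_INR, !plus_INR. simpl (INR 0).
  set (n := (j + (j + 0))%nat). set (e := exp (- (a * (x * (x * 1))))).
  replace (x ^ 2) with (x * (x * 1)) by ring.
  fold e. simpl (x ^ S (S n)). simpl (x ^ S n). toR. field. auto.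
Qed.

Lemma fj_int a j u v : ex_RInt (fj a j) u v.
Proof. apply exRI_cont. intros z. apply exd_cont. unfold fj. auto_derive. auto. Qed.

Lemma RInt_fjS a j u v : a <> 0 ->
  RInt (fj a (S j)) u v = Psi a j v - Psi a j u + (2 * INR j + 1) / (2 * a) * RInt (fj a j) u v.
Proof.
  intros Ha. set (q := (2 * INR j + 1) / (2 * a)).
  assert (Hc : forall y, ex_derive (fun x => fj a (S j) x - q * fj a j x) y).
  { intros y. unfold fj. auto_derive. auto. }
  assert (I := is_RInt_derive (Psi a j) (fun x => fj a (S j) x - q * fj a j x) u v
     (fun y _ => Psi_der a j y Ha)
     (fun y _ => exd_cont _ y (Hc y))).
  assert (E1 := is_RInt_unique _ _ _ _ I).
  unfold minus, plus, opp in E1; simpl in E1.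
  rewrite (RInt_ext (fj a (S j)) (fun x => (fj a (S j) x - q * fj a j x) + q * fj a j x))
    by (intros; toR; ring).
  assert (E2 := RInt_plus (fun x => fj a (S j) x - q * fj a j x) (fun x => q * fj a j x) u v).
  unfold plus in E2; simpl in E2. rewrite E2.
  2:{ eexists; exact I. }
  2:{ apply (ex_RInt_scal (fj a j) u v q). apply fj_int. }
  rewrite E1.
  assert (E3 := RInt_scal (fj a j) u v q (fj_int a j u v)).
  unfold scal in E3; simpl in E3; unfold mult in E3; simpl in E3. rewrite E3.
  toR. ring.
Qed.

Lemma imp_mom a j : 0 < a -> imp (fj a j) (mom a j).
Proof.
  intros Ha. induction j.
  - simpl. apply imp_ext with (ga a). { intros x. unfold fj, ga. simpl. ring. }
    apply imp_ga; auto.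
  - destruct IHj as [Hi Hl]. split.
    + intros; apply fj_int.
    + intros eps Heps. simpl.
      set (q := (2 * INR j + 1) / (2 * a)).
      assert (Hq : 0 <= q).
      { unfold q. apply Rdiv_le_0_compat. pose proof (pos_INR j). lra. lra. }
      destruct (decay (2 * j + 1) a Ha (eps * a / 2)) as [M1 [HM1 HD]].
      { apply Rmult_lt_0_compat. nra. lra. }
      destruct (Hl (eps / (2 * (q + 1)))) as [M2 HM2].
      { apply Rdiv_lt_0_compat; lra. }
      exists (Rmax M1 M2). intros u v Hu Hv.
      pose proof (Rmax_l M1 M2). pose proof (Rmax_r M1 M2).
      rewrite RInt_fjS by lra. fold q.
      assert (P1 : Rabs (Psi a j v) < eps / 4).
      { unfold Psi. assert (D := HD v ltac:(rewrite Rabs_right; lra)).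
        unfold Rdiv. rewrite Rabs_mult, Rabs_Ropp, (Rabs_right (/ (2 * a))).
        2:{ left. apply Rinv_0_lt_compat. lra. }
        apply Rmult_lt_reg_r with (2 * a). lra.
        rewrite Rmult_assoc, Rinv_l by lra. lra. }
      assert (P2 : Rabs (Psi a j u) < eps / 4).
      { unfold Psi. assert (D := HD u ltac:(rewrite Rabs_left; lra)).
        unfold Rdiv. rewrite Rabs_mult, Rabs_Ropp, (Rabs_right (/ (2 * a))).
        2:{ left. apply Rinv_0_lt_compat. lra. }
        apply Rmult_lt_reg_r with (2 * a). lra.
        rewrite Rmult_assoc, Rinv_l by lra. lra. }
      assert (P3 := HM2 u v ltac:(lra) ltac:(lra)).
      assert (P4 : q * Rabs (RInt (fj a j) u v - mom a j) < eps / 2).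
      { assert (Rabs (RInt (fj a j) u v - mom a j) * (2 * (q + 1)) < eps).
        { apply Rmult_lt_reg_r with (/ (2 * (q + 1))). apply Rinv_0_lt_compat; lra.
          rewrite Rmult_assoc, Rinv_r by lra. lra. }
        pose proof (Rabs_pos (RInt (fj a j) u v - mom a j)). nra. }
      replace (Psi a j v - Psi a j u + q * RInt (fj a j) u v - q * mom a j) with
        (Psi a j v + (- Psi a j u) + q * (RInt (fj a j) u v - mom a j)) by ring.
      eapply Rle_lt_trans. apply Rabs_triang.
      rewrite Rabs_mult, (Rabs_right q) by lra.
      eapply Rle_lt_trans. apply Rplus_le_compat_r. apply Rabs_triang.
      rewrite Rabs_Ropp. lra.
Qed.


Lemma sum_rev (F : nat -> R) n : sum_f_R0 F n = sum_f_R0 (fun i => F (n - i)%nat) n.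
Proof.
  revert F. induction n; intros F.
  - simpl. reflexivity.
  - rewrite (decomp_sum (fun i => F (S n - i)%nat)) by lia. simpl pred.
    rewrite tech5. replace (S n - 0)%nat with (S n) by lia.
    rewrite (IHn F). rewrite Rplus_comm. f_equal.
Qed.

Section Comb.
Variable a : R.
Hypothesis Ha : 0 < a.

Definition dd i := mom a i / INR (fact i).

Lemma dd_rec i : 2 * a * INR (S i) * dd (S i) = (2 * INR i + 1) * dd i.
Proof.
  unfold dd. simpl mom. rewrite fact_simpl, mult_INR.
  assert (0 < INR (fact i)) by apply INR_fact_lt_0.
  assert (0 < INR (S i)) by (apply lt_0_INR; lia).
  field. repeat split; lra.
Qed.

Definition cc k := sum_f_R0 (fun i => dd i * dd (k - i)) k.
Definition TT k := sum_f_R0 (fun i => INR i * dd i * dd (k - i)) k.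

Lemma TT_sym k : 2 * TT k = INR k * cc k.
Proof.
  unfold TT, cc.
  assert (E : TT k = sum_f_R0 (fun i => (INR k - INR i) * dd i * dd (k - i)) k).
  { unfold TT. rewrite sum_rev. apply sum_eq. intros i Hi.
    replace (k - (k - i))%nat with i by lia. rewrite minus_INR by lia. ring. }
  unfold TT in E.
  assert (E2 : sum_f_R0 (fun i => INR i * dd i * dd (k - i)) k +
       sum_f_R0 (fun i => (INR k - INR i) * dd i * dd (k - i)) k =
       INR k * sum_f_R0 (fun i => dd i * dd (k - i)) k).
  { rewrite <- plus_sum, scal_sum. apply sum_eq. intros. ring. }
  lra.
Qed.

Lemma TT_S k : 2 * a * TT (S k) = (INR k + 1) * cc k.
Proof.
  unfold TT. rewrite decomp_sum by lia. simpl pred.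
  replace (INR 0 * dd 0 * dd (S k - 0)%nat) with 0 by (simpl; ring).
  rewrite Rplus_0_l. rewrite scal_sum.
  assert (E : 2 * TT k + cc k = sum_f_R0 (fun i => (2 * INR i + 1) * dd i * dd (k - i)) k).
  { unfold TT, cc. rewrite scal_sum, <- plus_sum. apply sum_eq. intros; ring. }
  rewrite TT_sym in E.
  replace ((INR k + 1) * cc k) with (INR k * cc k + cc k) by ring. rewrite E.
  apply sum_eq. intros i Hi. replace (S k - S i)%nat with (k - i)%nat by lia.
  rewrite <- dd_rec. ring.
Qed.

Lemma cc_S k : a * cc (S k) = cc k.
Proof.
  assert (E1 := TT_sym (S k)). assert (E2 := TT_S k).
  rewrite S_INR in E1.
  assert (0 <= INR k) by apply pos_INR.
  apply Rmult_eq_reg_l with (INR k + 1); [|lra].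
  rewrite <- E2. replace (2 * a * TT (S k)) with (a * (2 * TT (S k))) by ring.
  rewrite E1. ring.
Qed.

Lemma cc_val k : cc k = (PI / a) / a ^ k.
Proof.
  induction k.
  - unfold cc, dd. simpl. rewrite !Rdiv_1_r.
    apply sqrt_sqrt. left. apply Rdiv_lt_0_compat. apply PI_RGT_0. auto.
  - assert (E := cc_S k). rewrite IHk in E.
    apply Rmult_eq_reg_l with a; [|lra]. rewrite E. simpl. field.
    repeat split; try apply pow_nonzero; lra.
Qed.

Lemma comb_mom k : sum_f_R0 (fun i => Binomial.C k i * mom a i * mom a (k - i)) k =
  INR (fact k) / a ^ k * (PI / a).
Proof.
  transitivity (INR (fact k) * cc k).
  - unfold cc. rewrite scal_sum. apply sum_eq. intros i Hi.
    unfold Binomial.C, dd.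
    assert (0 < INR (fact i)) by apply INR_fact_lt_0.
    assert (0 < INR (fact (k - i))) by apply INR_fact_lt_0.
    field. lra.
  - rewrite cc_val. field. repeat split; try apply pow_nonzero; lra.
Qed.
End Comb.


Definition cl a l := / PI * a ^ l / INR (fact l).

Lemma expand N x1 x2 :
  sqnorm2 x1 x2 * phi1N N x1 x2 =
  sum_f_R0 (fun l => sum_f_R0 (fun i =>
     cl (INR N) l * Binomial.C (S l) i * fj (INR N) i x1 * fj (INR N) (S l - i) x2) (S l)) (N - 1).
Proof.
  unfold phi1N. set (a := INR N). set (q := sqnorm2 x1 x2).
  rewrite !Rmult_assoc. rewrite !scal_sum.
  apply sum_eq. intros l Hl.
  assert (Eq : q = x1 ^ 2 + x2 ^ 2) by reflexivity.
  transitivity (cl a l * (exp (- (a * x1 ^ 2)) * exp (- (a * x2 ^ 2))) * q ^ (S l)).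
  { unfold cl. rewrite <- exp_plus. rewrite Rpow_mult_distr. simpl (q ^ S l).
    replace (- (a * x1 ^ 2) + - (a * x2 ^ 2)) with (- a * q) by (rewrite Eq; ring).
    field. pose proof PI_neq0. pose proof (INR_fact_neq_0 l). tauto. }
  rewrite Eq. rewrite binomial. rewrite scal_sum. apply sum_eq. intros i Hi.
  unfold fj. rewrite !pow_mult. ring.
Qed.

Lemma sum_Sl n : sum_f_R0 (fun l => INR (S l)) n = (INR n + 1) * (INR n + 2) / 2.
Proof.
  induction n.
  - simpl. field.
  - rewrite tech5, IHn. rewrite !S_INR. field.
Qed.

Lemma integral_part N : (2 <= N)%nat ->
  integral_R2 (fun x1 x2 => sqnorm2 x1 x2 * phi1N N x1 x2) ((INR N + 1) / (2 * INR N)).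
Proof.
  intros HN. set (a := INR N).
  assert (Ha : 0 < a) by (unfold a; apply lt_0_INR; lia).
  exists (fun x1 => sum_f_R0 (fun l => sum_f_R0 (fun i =>
     (cl a l * Binomial.C (S l) i * fj a i x1) * mom a (S l - i)) (S l)) (N - 1)).
  split.
  - intros x1. apply imp_improper.
    apply imp_ext with (fun x2 => sum_f_R0 (fun l => sum_f_R0 (fun i =>
       (cl a l * Binomial.C (S l) i * fj a i x1) * fj a (S l - i) x2) (S l)) (N - 1)).
    { intros x2. rewrite expand. reflexivity. }
    apply imp_sum. intros l _. apply imp_sum. intros i _. apply imp_scal. apply imp_mom; auto.
  - apply imp_improper.
    replace ((a + 1) / (2 * a)) with
      (sum_f_R0 (fun l => sum_f_R0 (fun i =>
         (cl a l * Binomial.C (S l) i * mom a (S l - i)) * mom a i) (S l)) (N - 1)).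
    + apply imp_ext with (fun x1 => sum_f_R0 (fun l => sum_f_R0 (fun i =>
         (cl a l * Binomial.C (S l) i * mom a (S l - i)) * fj a i x1) (S l)) (N - 1)).
      { intros x1. apply sum_eq. intros. apply sum_eq. intros. ring. }
      apply (imp_sum (N - 1) (fun l x1 => sum_f_R0 (fun i =>
         (cl a l * Binomial.C (S l) i * mom a (S l - i)) * fj a i x1) (S l))
         (fun l => sum_f_R0 (fun i =>
         (cl a l * Binomial.C (S l) i * mom a (S l - i)) * mom a i) (S l))). intros l _. apply imp_sum. intros i _. apply imp_scal. apply imp_mom; auto.
    + transitivity (sum_f_R0 (fun l => INR (S l) / (a * a)) (N - 1)).
      * apply sum_eq. intros l _.
        transitivity (cl a l * sum_f_R0 (fun i => Binomial.C (S l) i * mom a i * mom a (S l - i)) (S l)).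
        { rewrite scal_sum. apply sum_eq. intros. ring. }
        rewrite comb_mom by auto. unfold cl. rewrite fact_simpl, mult_INR. simpl (a ^ S l).
        field. pose proof PI_neq0. pose proof (INR_fact_neq_0 l).
        pose proof (pow_nonzero a l ltac:(lra)). repeat split; auto; lra.
      * unfold Rdiv at 1. rewrite <- scal_sum. rewrite Rmult_comm, sum_Sl.
        replace (INR (N - 1)) with (a - 1) by (unfold a; rewrite minus_INR by lia; simpl; ring).
        field. lra.
Qed.


Lemma mono_from_der f f' :
  (forall c, 0 <= c -> derivable_pt_lim f c (f' c)) ->
  (forall c, 0 <= c -> 0 <= f' c) ->
  forall x y, 0 <= x <= y -> f x <= f y.
Proof.
  intros Hd Hp x y Hxy.
  destruct (Req_dec x y) as [->|Hne]; [lra|].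
  destruct (MVT_cor2 f f' x y ltac:(lra) (fun c Hc => Hd c ltac:(lra))) as [c [Hc1 Hc2]].
  assert (0 <= f' c) by (apply Hp; lra).
  assert (0 <= f' c * (y - x)) by (apply Rmult_le_pos; lra). lra.
Qed.

Lemma convex_aux f f' :
  (forall c, 0 <= c -> derivable_pt_lim f c (f' c)) ->
  (forall c d, 0 <= c <= d -> f' c <= f' d) ->
  forall x y t, 0 <= x -> x < y -> 0 <= t <= 1 ->
  f (t * x + (1 - t) * y) <= t * f x + (1 - t) * f y.
Proof.
  intros Hd Hm x y t Hx Hxy Ht.
  destruct (Req_dec t 0) as [->|Ht0].
  { replace (0 * x + (1 - 0) * y) with y by ring. lra. }
  destruct (Req_dec t 1) as [->|Ht1].
  { replace (1 * x + (1 - 1) * y) with x by ring. lra. }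
  set (z := t * x + (1 - t) * y).
  assert (Hz1 : x < z). { unfold z. assert (0 < (1 - t) * (y - x)) by (apply Rmult_lt_0_compat; lra). nra. }
  assert (Hz2 : z < y). { unfold z. assert (0 < t * (y - x)) by (apply Rmult_lt_0_compat; lra). nra. }
  destruct (MVT_cor2 f f' x z Hz1 (fun c Hc => Hd c ltac:(lra))) as [c1 [E1 Hc1]].
  destruct (MVT_cor2 f f' z y Hz2 (fun c Hc => Hd c ltac:(lra))) as [c2 [E2 Hc2]].
  assert (Hm12 : f' c1 <= f' c2) by (apply Hm; lra).
  assert (Ez1 : z - x = (1 - t) * (y - x)) by (unfold z; ring).
  assert (Ez2 : y - z = t * (y - x)) by (unfold z; ring).
  set (P := t * (1 - t) * (y - x)).
  assert (HP : 0 <= P) by (unfold P; apply Rmult_le_pos; [apply Rmult_le_pos|]; lra).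
  assert (P * f' c1 <= P * f' c2) by (apply Rmult_le_compat_l; auto).
  assert (t * (f z - f x) <= (1 - t) * (f y - f z)).
  { rewrite E1, E2, Ez1, Ez2.
    replace (t * (f' c1 * ((1 - t) * (y - x)))) with (P * f' c1) by (unfold P; ring).
    replace ((1 - t) * (f' c2 * (t * (y - x)))) with (P * f' c2) by (unfold P; ring). lra. }
  lra.
Qed.

Lemma convex_from_der f f' :
  (forall c, 0 <= c -> derivable_pt_lim f c (f' c)) ->
  (forall c d, 0 <= c <= d -> f' c <= f' d) ->
  forall x y t, 0 <= x -> 0 <= y -> 0 <= t <= 1 ->
  f (t * x + (1 - t) * y) <= t * f x + (1 - t) * f y.
Proof.
  intros Hd Hm x y t Hx Hy Ht.
  destruct (Rlt_or_le x y) as [Hxy|Hxy].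
  - apply convex_aux with f'; auto.
  - destruct (Req_dec x y) as [->|Hne].
    + replace (t * y + (1 - t) * y) with y by ring. lra.
    + assert (H := convex_aux f f' Hd Hm y x (1 - t) Hy ltac:(lra) ltac:(lra)).
      replace (t * x + (1 - t) * y) with ((1 - t) * y + (1 - (1 - t)) * x) by ring. lra.
Qed.

Definition Sn n u := sum_f_R0 (fun l => u ^ l / INR (fact l)) n.

Lemma Sn_aux n (u : R) : Sn n u - u ^ n / INR (fact n) + u ^ n / INR (fact n) =
  Sn (S n) u - u ^ S n / INR (fact (S n)).
Proof. unfold Sn. simpl sum_f_R0. change (u ^ S n) with (u * u ^ n). change (fact (S n)) with (fact n + n * fact n)%nat. ring. Qed.

Lemma Sn_der n u : is_derive (Sn n) u (Sn n u - u ^ n / INR (fact n)).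
Proof.
  induction n.
  - unfold Sn. simpl. apply is_derive_ext with (fun _ => 1).
    { intros; simpl; field. }
    replace (1 / 1 - 1 / 1) with 0 by field. auto_derive; auto.
  - assert (D2 : is_derive (fun u => u ^ S n / INR (fact (S n))) u (u ^ n / INR (fact n))).
    { auto_derive; [trivial|].
      change (match n with 0%nat => 1 | S _ => INR n + 1 end) with (INR (S n)).
      change (fact n + n * fact n)%nat with (fact (S n)).
      rewrite fact_simpl, mult_INR.
      pose proof (INR_fact_neq_0 n). assert (INR (S n) <> 0) by (apply not_0_INR; lia).
      field. auto. }
    assert (D := is_derive_plus _ _ u _ _ IHn D2).
    unfold plus in D; simpl in D.
    apply is_derive_ext with (fun u => Sn n u + u ^ S n / INR (fact (S n))).
    { intros; unfold Sn; reflexivity. }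
    rewrite <- (Sn_aux n u). exact D.
Qed.

Lemma Sn_ge1 n u : 0 <= u -> 1 <= Sn n u.
Proof.
  intros Hu. induction n.
  - unfold Sn; simpl. lra.
  - unfold Sn in *; rewrite tech5.
    assert (0 <= u ^ S n / INR (fact (S n))).
    { apply Rdiv_le_0_compat. apply pow_le; auto. apply INR_fact_lt_0. }
    lra.
Qed.

Definition hfun n u := u - ln (Sn n u).
Definition hd n u := u ^ n / INR (fact n) / Sn n u.

Lemma hfun_der n u : 0 <= u -> derivable_pt_lim (hfun n) u (hd n u).
Proof.
  intros Hu. apply is_derive_Reals.
  assert (HS := Sn_ge1 n u Hu).
  assert (Dl : is_derive ln (Sn n u) (/ Sn n u)).
  { apply is_derive_Reals. apply derivable_pt_lim_ln. lra. }
  assert (D := is_derive_comp ln (Sn n) u _ _ Dl (Sn_der n u)).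
  assert (D2 := is_derive_minus _ _ u _ _ (is_derive_id u) D).
  unfold minus, plus, opp, scal, one in D2; simpl in D2; unfold mult in D2; simpl in D2.
  unfold hfun. replace (hd n u) with (1 + - ((Sn n u - u ^ n / INR (fact n)) * / Sn n u)).
  exact D2. unfold hd. field. pose proof (INR_fact_neq_0 n). repeat split; auto; lra.
Qed.

Lemma hd_mono n u v : 0 <= u <= v -> hd n u <= hd n v.
Proof.
  intros Huv. unfold hd.
  assert (Hu := Sn_ge1 n u ltac:(lra)). assert (Hv := Sn_ge1 n v ltac:(lra)).
  assert (Hf := INR_fact_lt_0 n).
  assert (K : u ^ n * Sn n v <= v ^ n * Sn n u).
  { unfold Sn. rewrite !scal_sum. apply sum_Rle. intros l Hl.
    replace n with (l + (n - l))%nat by lia. rewrite !pow_add.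
    assert (0 <= u ^ l) by (apply pow_le; lra).
    assert (0 <= v ^ l) by (apply pow_le; lra).
    assert (u ^ (n - l) <= v ^ (n - l)) by (apply pow_incr; lra).
    assert (0 <= u ^ (n - l)) by (apply pow_le; lra).
    assert (0 < INR (fact l)) by apply INR_fact_lt_0.
    unfold Rdiv. assert (0 < / INR (fact l)) by (apply Rinv_0_lt_compat; lra).
    replace (v ^ l * / INR (fact l) * (u ^ l * u ^ (n - l))) with ((u ^ l * v ^ l * / INR (fact l)) * u ^ (n - l)) by ring.
    replace (u ^ l * / INR (fact l) * (v ^ l * v ^ (n - l))) with ((u ^ l * v ^ l * / INR (fact l)) * v ^ (n - l)) by ring.
    apply Rmult_le_compat_l; auto.
    apply Rmult_le_pos; [apply Rmult_le_pos|]; lra. }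
  unfold Rdiv. apply Rmult_le_reg_r with (Sn n u * Sn n v * INR (fact n)).
  { apply Rmult_lt_0_compat; [apply Rmult_lt_0_compat|]; lra. }
  replace (u ^ n * / INR (fact n) * / Sn n u * (Sn n u * Sn n v * INR (fact n))) with (u ^ n * Sn n v) by (field; lra).
  replace (v ^ n * / INR (fact n) * / Sn n v * (Sn n u * Sn n v * INR (fact n))) with (v ^ n * Sn n u) by (field; lra).
  exact K.
Qed.

Lemma hd_nonneg n u : 0 <= u -> 0 <= hd n u.
Proof.
  intros Hu. unfold hd. assert (Hs := Sn_ge1 n u Hu).
  apply Rdiv_le_0_compat; [|lra]. apply Rdiv_le_0_compat. apply pow_le; auto. apply INR_fact_lt_0.
Qed.

Lemma logconc_part N : (2 <= N)%nat -> log_concave2 (phi1N N).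
Proof.
  intros HN. set (a := INR N). set (n := (N - 1)%nat).
  assert (Ha : 0 < a) by (unfold a; apply lt_0_INR; lia).
  assert (Ephi : forall x1 x2, - ln (phi1N N x1 x2) = ln PI + hfun n (a * sqnorm2 x1 x2)).
  { intros x1 x2. unfold phi1N. fold a n.
    assert (Hq : 0 <= sqnorm2 x1 x2).
    { unfold sqnorm2. pose proof (pow2_ge_0 x1). pose proof (pow2_ge_0 x2). lra. }
    assert (HS := Sn_ge1 n (a * sqnorm2 x1 x2) ltac:(nra)).
    change (sum_f_R0 (fun l => (a * sqnorm2 x1 x2) ^ l / INR (fact l)) n) with (Sn n (a * sqnorm2 x1 x2)).
    assert (HPI := PI_RGT_0).
    rewrite ln_mult; [| apply Rmult_lt_0_compat; [apply Rinv_0_lt_compat; lra|apply exp_pos] | lra].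
    rewrite ln_mult; [| apply Rinv_0_lt_compat; lra | apply exp_pos].
    rewrite ln_Rinv by lra. rewrite ln_exp. unfold hfun. ring. }
  unfold log_concave2, convex2. intros x1 x2 y1 y2 t Ht.
  rewrite !Ephi.
  set (qx := sqnorm2 x1 x2). set (qy := sqnorm2 y1 y2).
  set (qz := sqnorm2 (t * x1 + (1 - t) * y1) (t * x2 + (1 - t) * y2)).
  assert (Hsq : forall p r, 0 <= sqnorm2 p r).
  { intros p r. unfold sqnorm2. pose proof (pow2_ge_0 p). pose proof (pow2_ge_0 r). lra. }
  assert (Hqx : 0 <= qx) by apply Hsq.
  assert (Hqy : 0 <= qy) by apply Hsq.
  assert (Hqz : 0 <= qz) by apply Hsq.
  assert (Hconv : qz <= t * qx + (1 - t) * qy).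
  { assert (E : t * qx + (1 - t) * qy - qz = t * (1 - t) * ((x1 - y1) ^ 2 + (x2 - y2) ^ 2)).
    { unfold qx, qy, qz, sqnorm2. ring. }
    assert (0 <= t * (1 - t) * ((x1 - y1) ^ 2 + (x2 - y2) ^ 2)).
    { apply Rmult_le_pos. apply Rmult_le_pos; lra. pose proof (pow2_ge_0 (x1 - y1)). pose proof (pow2_ge_0 (x2 - y2)). lra. }
    lra. }
  assert (H1 : hfun n (a * qz) <= hfun n (t * (a * qx) + (1 - t) * (a * qy))).
  { apply (mono_from_der (hfun n) (hd n)).
    - intros; apply hfun_der; auto.
    - intros; apply hd_nonneg; auto.
    - split. nra. nra. }
  assert (H2 := convex_from_der (hfun n) (hd n) (fun c Hc => hfun_der n c Hc)
                 (fun c d Hcd => hd_mono n c d Hcd) (a * qx) (a * qy) t ltac:(nra) ltac:(nra) Ht).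
  lra.
Qed.


Theorem mainTheorem14 (N : nat) (HN : (2 <= N)%nat) :
  log_concave2 (phi1N N) /\
  integral_R2 (fun x1 x2 => sqnorm2 x1 x2 * phi1N N x1 x2)
              ((INR N + 1) / (2 * INR N)).
Proof.
  split.
  - apply logconc_part; auto.
  - apply integral_part; auto.
Qed.
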